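(* Let $0\to P\to B\to R\to0$ be a short exact sequence of finite-length $\Bbbk[N]$-modules, and let $\lambda,\mu,\nu$ be the Jordan types of $N$ acting on $P$, $B$, $R$ respectively. (1) $\mu\ge\lambda+\nu$ in dominance order, where $\lambda+\nu$ is the partition whose multiset of parts is the union of the parts of $\lambda$ and of $\nu$. (2) If moreover $\lambda$ and $\mu$ are $t$-interlaced for some $t\in\mathbb Z$, then $\nu$ is not strictly greater than $\operatorname{diff}(\mu,\lambda)$ in dominance order.
   Context: A finite-length $\Bbbk[N]$-module is a finite-dimensional vector space with a nilpotent operator $N$; its Jordan type is the partition of block sizes. Dominance order: $\gamma\le\kappa$ if $\gamma_1+\dots+\gamma_k\le\kappa_1+\dots+\kappa_k$ for all $k$ (parts padded with zeros). For $t\ge0$, $\lambda,\mu$ are $t$-interlaced if $\mu_1\ge\dots\ge\mu_{t+1}\ge\lambda_1\ge\mu_{t+2}\ge\mu_{t+3}\ge\lambda_2\ge\mu_{t+4}\ge\mu_{t+5}\ge\lambda_3\ge\cdots$ (all partitions padded with infinitely many zeros), and then $\operatorname{diff}(\mu,\lambda)=(\mu_1,\dots,\mu_t,\mu_{t+1}+\mu_{t+2}-\lambda_1,\mu_{t+3}+\mu_{t+4}-\lambda_2,\dots)$. For $t\le0$, they are $t$-interlaced if $\lambda_i=\mu_i$ for $i\le-t$ and $\mu_{-t+1}\ge\lambda_{-t+1}\ge\mu_{-t+2}\ge\mu_{-t+3}\ge\lambda_{-t+2}\ge\mu_{-t+4}\ge\mu_{-t+5}\ge\lambda_{-t+3}\ge\cdots$,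 and then $\operatorname{diff}(\mu,\lambda)=(\mu_{-t+1}+\mu_{-t+2}-\lambda_{-t+1},\mu_{-t+3}+\mu_{-t+4}-\lambda_{-t+2},\dots)$. *)

(* Defs.v *)
From mathcomp Require Import all_boot all_order all_algebra.
Set Implicit Arguments. Unset Strict Implicit. Unset Printing Implicit Defensive.
Import GRing.Theory.
Local Open Scope ring_scope.

Definition is_partition (s : seq nat) : bool :=
  sorted geq s && all (fun x => 0 < x)%N s.

Definition parts (s : seq nat) : nat -> nat := fun i => nth 0%N s i.

(* 1-based access: part s i = s_i for i >= 1. *)
Definition part1 (s : seq nat) (i : nat) : nat := nth 0%N s i.-1.

(* Block boundaries: partial sums s_1, s_1+s_2, ... *)
Fixpoint psums (acc : nat) (s : seq nat) : seq nat :=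
  if s is x :: s' then (acc + x)%N :: psums (acc + x)%N s' else [::].

(* The nilpotent Jordan matrix with consecutive Jordan blocks of sizes s
   (row-vector convention: e_i N = e_(i+1) inside a block, e_last N = 0). *)
Definition jordan_nil (K : fieldType) (n : nat) (s : seq nat) : 'M[K]_n :=
  \matrix_(i < n, j < n)
     (((j : nat) == i.+1) && ((j : nat) \notin psums 0 s))%:R.

Definition nilpotent_mx (K : fieldType) (n : nat) (N : 'M[K]_n) : Prop :=
  exists k : nat, N ^+ k = 0.

Definition jordan_type (K : fieldType) (n : nat) (N : 'M[K]_n) (lam : seq nat)
  : Prop :=
  is_partition lam /\ sumn lam = n /\
  exists S : 'M[K]_n, S \in unitmx /\ S *m N *m invmx S = @jordan_nil K n lam.

Definition dominated (a b : nat -> nat) : Prop :=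
  forall k : nat, (\sum_(i < k) a i <= \sum_(i < k) b i)%N.

Definition strictly_dominated (a b : nat -> nat) : Prop :=
  dominated a b /\ exists i, a i != b i.

Definition part_union (lam nu : seq nat) : seq nat := sort geq (lam ++ nu).

(* t-interlacing for t = n >= 0 (1-based indices). *)
Definition interlaced_pos (n : nat) (lam mu : seq nat) : Prop :=
  (forall i, (1 <= i <= n)%N -> (part1 mu i >= part1 mu i.+1)%N) /\
  (forall j, (1 <= j)%N ->
     [/\ (part1 mu (n + 2 * j).-1 >= part1 lam j)%N,
         (part1 lam j >= part1 mu (n + 2 * j))%N &
         (part1 mu (n + 2 * j) >= part1 mu (n + 2 * j).+1)%N]).

(* t-interlacing for t = -s <= 0. *)
Definition interlaced_neg (s : nat) (lam mu : seq nat) : Prop :=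
  (forall i, (1 <= i <= s)%N -> part1 lam i = part1 mu i) /\
  (forall j, (1 <= j)%N ->
     [/\ (part1 mu (s + 2 * j).-1 >= part1 lam (s + j))%N,
         (part1 lam (s + j) >= part1 mu (s + 2 * j))%N &
         (part1 mu (s + 2 * j) >= part1 mu (s + 2 * j).+1)%N]).

Definition interlaced (t : int) (lam mu : seq nat) : Prop :=
  match t with
  | Posz n => interlaced_pos n lam mu
  | Negz n => interlaced_neg n.+1 lam mu
  end.

(* diff(mu, lam) as a zero-padded sequence, 0-based index i (entry i+1). *)
Definition diff_pos (n : nat) (mu lam : seq nat) (i : nat) : nat :=
  if (i < n)%N then part1 mu i.+1
  else let j := (i - n).+1 in
       (part1 mu (n + 2 * j).-1 + part1 mu (n + 2 * j) - part1 lam j)%N.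

Definition diff_neg (s : nat) (mu lam : seq nat) (i : nat) : nat :=
  let j := i.+1 in
  (part1 mu (s + 2 * j).-1 + part1 mu (s + 2 * j) - part1 lam (s + j))%N.

Definition diff (t : int) (mu lam : seq nat) : nat -> nat :=
  match t with
  | Posz n => diff_pos n mu lam
  | Negz n => diff_neg n.+1 mu lam
  end.

(* Main.v *)
Require Import Defs.
From mathcomp Require Import all_boot all_order all_algebra.
From mathcomp Require Import zify.
Import GRing.Theory.


Definition rk (c : nat) (s : seq nat) := sumn [seq y - c | y <- s].
Definition Ssum (x : nat -> nat) (m : nat) := \sum_(i < m) x i.

Lemma rk_cons c x s : rk c (x :: s) = (x - c) + rk c s.
Proof. by []. Qed.

Lemma lemA (s : seq nat) a c : Ssum (parts s) a <= a * c + rk c s.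
Proof.
rewrite /Ssum /parts.
elim: s a => [|x s IH] a.
  by rewrite big1 // => i _; rewrite nth_nil.
case: a => [|a]; first by rewrite big_ord0.
rewrite big_ord_recl /= rk_cons.
have := IH a.
have -> : \sum_(i < a) nth 0 (x :: s) (lift ord0 i) = \sum_(i < a) nth 0 s i.
  by apply: eq_bigr => i _; rewrite /= /bump /=.
rewrite mulSn.
lia.
Qed.

Lemma rk0 c s : all (fun y => y <= c) s -> rk c s = 0.
Proof.
elim: s => [|x s IH] //= /andP[hx hs].
rewrite rk_cons IH //; lia.
Qed.

Lemma lemB (s : seq nat) a : sorted geq s ->
  a * nth 0 s a + rk (nth 0 s a) s <= Ssum (parts s) a.
Proof.
rewrite /Ssum /parts.
elim: s a => [|x s IH] a.
  by move=> _; rewrite nth_nil muln0.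
move=> hs.
have hall : all (fun y => y <= x) s.
  by have := order_path_min (fun _ _ _ h1 h2 => leq_trans h2 h1) hs.
have hs' : sorted geq s by exact: path_sorted hs.
case: a => [|a].
  by rewrite big_ord0 /= rk_cons subnn rk0.
rewrite big_ord_recl /= rk_cons.
have -> : \sum_(i < a) nth 0 (x :: s) (lift ord0 i) = \sum_(i < a) nth 0 s i.
  by apply: eq_bigr => i _; rewrite /= /bump /=.
have := IH a hs'.
have hc : nth 0 s a <= x.
  case: (ltnP a (size s)) => ha.
    by move/allP: hall; apply; apply: mem_nth.
  by rewrite nth_default.
lia.
Qed.

Lemma rk_cat c s1 s2 : rk c (s1 ++ s2) = rk c s1 + rk c s2.
Proof. by rewrite /rk map_cat sumn_cat. Qed.

Lemma rk_union c lam nu : rk c (part_union lam nu) = rk c lam + rk c nu.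
Proof.
rewrite -rk_cat /rk /part_union; apply: perm_sumn; apply: perm_map.
by rewrite perm_sort.
Qed.

Lemma S_succ x m : Ssum x m.+1 = Ssum x m + x m.
Proof. by rewrite /Ssum big_ord_recr. Qed.

Lemma dom_antisym (x y : nat -> nat) : dominated x y -> dominated y x ->
  forall i, x i = y i.
Proof.
move=> h1 h2 i.
have a1 := h1 i.+1; have a2 := h2 i.+1; have a3 := h1 i; have a4 := h2 i.
rewrite -!/(Ssum _ _) !S_succ in a1 a2.
rewrite -!/(Ssum _ _) in a3 a4.
lia.
Qed.

Section Comb.
Variables lam mu nu : seq nat.
Hypothesis mu_sorted : sorted geq mu.
Hypothesis Hrk : forall c, rk c lam + rk c nu <= rk c mu.

Lemma keyK a b : Ssum (parts nu) a + Ssum (parts lam) b <= Ssum (parts mu) (a + b).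
Proof.
set c := nth 0 mu (a + b).
have h1 := lemA nu a c.
have h2 := lemA lam b c.
have h3 := lemB mu (a + b) mu_sorted.
have h4 := Hrk c.
rewrite -/c in h3.
rewrite mulnDl in h3.
lia.
Qed.

Lemma part1_comb : dominated (parts (part_union lam nu)) (parts mu).
Proof.
move=> k.
set c := nth 0 mu k.
have h1 := lemA (part_union lam nu) k c.
have h3 := lemB mu k mu_sorted.
have h4 := Hrk c.
rewrite rk_union in h1.
rewrite -/c in h3.
rewrite /Ssum in h1 h3.
lia.
Qed.

Lemma part2_pos n : interlaced_pos n lam mu ->
  dominated (parts nu) (diff_pos n mu lam).
Proof.
move=> [_ Hj].
have base : forall m, m <= n -> Ssum (diff_pos n mu lam) m = Ssum (parts mu) m.
  elim=> [|m IH] hm; first by rewrite /Ssum !big_ord0.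
  rewrite !S_succ IH; last by lia.
  by rewrite /diff_pos ifT //.
have step : forall j, Ssum (diff_pos n mu lam) (n + j) + Ssum (parts lam) j
                     = Ssum (parts mu) (n + 2 * j).
  elim=> [|j IH]; first by rewrite addn0 base // /Ssum big_ord0 addn0.
  rewrite addnS !S_succ.
  have -> : n + 2 * j.+1 = (n + 2 * j).+2 by lia.
  rewrite !S_succ.
  have [hA _ _] := Hj j.+1 isT.
  have hA' : parts lam j <= parts mu (n + 2 * j).
    move: hA; rewrite /part1 /parts.
    by have -> : (n + 2 * j.+1).-1.-1 = n + 2 * j by lia.
  have hd : diff_pos n mu lam (n + j) =
      parts mu (n + 2 * j) + parts mu (n + 2 * j).+1 - parts lam j.
    rewrite /diff_pos ifF; last by lia.
    have -> : (n + j - n).+1 = j.+1 by lia.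
    rewrite /part1 /parts.
    have -> : (n + 2 * j.+1).-1.-1 = n + 2 * j by lia.
    by have -> : (n + 2 * j.+1).-1 = (n + 2 * j).+1 by lia.
  rewrite hd; lia.
move=> m.
rewrite -!/(Ssum _ _).
case: (leqP m n) => hm.
  rewrite base //.
  have := keyK m 0.
  by rewrite addn0 /Ssum big_ord0 addn0.
have -> : m = n + (m - n) by lia.
set j := m - n.
have := step j.
have := keyK (n + j) j.
have -> : n + j + j = n + 2 * j by lia.
lia.
Qed.

Lemma part2_neg s : interlaced_neg s lam mu ->
  dominated (parts nu) (diff_neg s mu lam).
Proof.
move=> [Hi Hj].
have base : forall m, m <= s -> Ssum (parts lam) m = Ssum (parts mu) m.
  elim=> [|m IH] hm; first by rewrite /Ssum !big_ord0.
  rewrite !S_succ IH; last by lia.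
  rewrite /parts; have := Hi m.+1; rewrite /part1 /= => -> //; lia.
have step : forall j, Ssum (diff_neg s mu lam) j + Ssum (parts lam) (s + j)
                     = Ssum (parts mu) (s + 2 * j).
  elim=> [|j IH]. rewrite /Ssum big_ord0 add0n. have -> : s + 2 * 0 = s by lia. exact: base.
  rewrite addnS !S_succ.
  have -> : s + 2 * j.+1 = (s + 2 * j).+2 by lia.
  rewrite !S_succ.
  have [hA _ _] := Hj j.+1 isT.
  have hA' : parts lam (s + j) <= parts mu (s + 2 * j).
    move: hA; rewrite /part1 /parts.
    have -> : (s + 2 * j.+1).-1.-1 = s + 2 * j by lia.
    by have -> : (s + j.+1).-1 = s + j by lia.
  have hd : diff_neg s mu lam j =
      parts mu (s + 2 * j) + parts mu (s + 2 * j).+1 - parts lam (s + j).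
    rewrite /diff_neg /part1 /parts.
    have -> : (s + 2 * j.+1).-1.-1 = s + 2 * j by lia.
    have -> : (s + 2 * j.+1).-1 = (s + 2 * j).+1 by lia.
    by have -> : (s + j.+1).-1 = s + j by lia.
  rewrite hd; lia.
move=> j.
rewrite -!/(Ssum _ _).
have := step j.
have := keyK j (s + j).
have -> : j + (s + j) = s + 2 * j by lia.
lia.
Qed.

End Comb.

Definition noq (ps : seq nat) (i k : nat) :=
  all (fun q => ~~ ((i < q) && (q <= i + k))) ps.

Lemma noq0 ps i : noq ps i 0.
Proof. elim: ps => //= q ps ->; rewrite andbT addn0; apply/negP => /andP[]; lia. Qed.

Lemma noqS ps i k : noq ps i k.+1 = noq ps i k && ((i + k).+1 \notin ps).
Proof.
elim: ps => //= q ps IH; rewrite IH in_cons negb_or.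
have -> : ~~ ((i < q) && (q <= i + k.+1)) =
   ~~ ((i < q) && (q <= i + k)) && ((i + k).+1 != q).
  case: (ltnP i q) => h1 /=; last by case: eqP => // h; lia.
  case: (leqP q (i + k)) => h2 /=; first by apply/negP; lia.
  case: eqP => [<-|ne]; first by rewrite addnS leqnn.
  by apply/negP => h3; apply: ne; lia.
by rewrite eq_sym; case: (q != _); case: (~~ _); case: (noq ps i k).
Qed.

Section J.
Variable K : fieldType.
Local Open Scope ring_scope.

Lemma Jpow n lam k : (jordan_nil K n lam) ^+ k =
  \matrix_(i < n, j < n) ((((j : nat) == i + k) && noq (psums 0 lam) i k)%N)%:R.
Proof.
elim: k => [|k IH].
  apply/matrixP => i j; rewrite expr0 !mxE noq0 andbT addn0 eq_sym.
  by [].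
rewrite exprSr IH -mulmxE; apply/matrixP => i j; rewrite !mxE.
case: (ltnP (i + k) n) => hl.
  rewrite (bigD1 (Ordinal hl)) //= big1 ?addr0.
    rewrite !mxE /= eqxx /= noqS addnS.
    case: eqP => [->|_] /=; last by rewrite mulr0.
    by case: (noq _ _ _); case: (_ \in _); rewrite /= ?mul1r ?mul0r.
  move=> l /negbTE hne; rewrite !mxE.
  have -> : ((l : nat) == (i + k)%N) = false.
    by apply/negbTE; apply: contraFN hne => /eqP h; apply/eqP; apply: val_inj.
  by rewrite mul0r.
rewrite big1.
  have -> : ((j : nat) == (i + k.+1)%N) = false by apply/negbTE; have := ltn_ord j; lia.
  by [].
move=> l _; rewrite !mxE.
have -> : ((l : nat) == (i + k)%N) = false by apply/negbTE; have := ltn_ord l; lia.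
by rewrite mul0r.
Qed.
End J.

Section R.
Variable K : fieldType.
Local Open Scope ring_scope.

Lemma rank_shift n k (c : nat -> bool) :
  \rank (\matrix_(i < n, j < n) ((((j : nat) == i + k) && c i)%N)%:R : 'M[K]_n)
  = #|[set i : 'I_n | c i && (i + k < n)%N]|.
Proof.
set M := \matrix_(i < n, j < n) _.
set A := [set i : 'I_n | _].
set m := #|A|.
pose f : 'I_m -> 'I_n := fun u => enum_val u.
pose B := rowsub f M.
have fA : forall u, f u \in A by move=> u; exact: enum_valP.
have BBt : B *m B^T = 1%:M.
  apply/matrixP => u v; rewrite !mxE.
  have := fA u; rewrite inE => /andP[cu hu].
  have := fA v; rewrite inE => /andP[cv hv].
  rewrite (bigD1 (Ordinal hu)) //= big1 ?addr0.
    rewrite !mxE /= eqxx cu cv /= mul1r.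
    have -> : ((f u + k)%N == (f v + k)%N) = (u == v).
      by rewrite eqn_add2r; apply/eqP/eqP => [h|->] //; apply: enum_val_inj; apply: val_inj.
    by case: (u == v).
  move=> j hj; rewrite !mxE.
  have -> : ((j : nat) == (f u + k)%N) = false.
    by apply/negbTE; apply: contraNN hj => /eqP h; apply/eqP; apply: val_inj.
  by rewrite mul0r.
have E : M = (\matrix_(i < n, u < m) (i == f u)%:R) *m B.
  apply/matrixP => i j; rewrite !mxE.
  case: (boolP (i \in A)) => iA.
    rewrite (bigD1 (enum_rank_in iA i)) //= big1 ?addr0.
      by rewrite !mxE /f enum_rankK_in // eqxx mul1r.
    move=> u hu; rewrite !mxE.
    have -> : (i == f u) = false.
      apply/negbTE; apply: contraNN hu => /eqP e.
      by apply/eqP; apply: enum_val_inj; rewrite enum_rankK_in // e.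
    by rewrite mul0r.
  rewrite big1.
    move: iA; rewrite inE negb_and => /orP[/negbTE -> | hk].
      by rewrite andbF.
    have -> : ((j : nat) == (i + k)%N) = false.
      by apply/negbTE; have := ltn_ord j; move: hk; rewrite -leqNgt; lia.
    by [].
  move=> u _; rewrite !mxE.
  have -> : (i == f u) = false.
    by apply/negbTE; apply: contraNN iA => /eqP ->.
  by rewrite mul0r.
apply/eqP; rewrite eqn_leq; apply/andP; split.
  rewrite E; apply: leq_trans (mxrankM_maxr _ _) _.
  exact: rank_leq_row.
have h1 : (m <= \rank B)%N.
  rewrite -{1}(mxrank1 K m) -BBt; exact: mxrankM_maxl.
apply: leq_trans h1 _.
apply: mxrankS; exact: rowsub_sub.
Qed.
End R.


Lemma card_ord_count n (P : nat -> bool) :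
  #|[set i : 'I_n | P i]| = count P (iota 0 n).
Proof.
rewrite -sum1_card (eq_bigl (fun i : 'I_n => P i)); last by move=> i; rewrite inE.
by rewrite -(big_mkord P (fun _ => 1)) /index_iota subn0 sum1_count.
Qed.

Lemma psums_ge acc s q : q \in psums acc s -> acc <= q.
Proof.
elim: s acc => //= x s IH acc; rewrite in_cons => /orP[/eqP ->|/IH]; lia.
Qed.

Lemma count_lt acc x k :
  count (fun i => i + k < acc + x) (iota acc x) = x - k.
Proof.
have -> : x = (x - k) + (x - (x - k)) by lia.
rewrite iotaD count_cat.
rewrite (eq_in_count (a2 := predT)); last first.
  by move=> i; rewrite mem_iota => /andP[h1 h2] /=; lia.
rewrite count_predT size_iota (eq_in_count (a2 := pred0)).
  by rewrite count_pred0; lia.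
by move=> i; rewrite mem_iota => /andP[h1 h2] /=; lia.
Qed.

Lemma count_noq k s acc :
  count (fun i => noq (psums acc s) i k && (i + k < acc + sumn s))
        (iota acc (sumn s)) = rk k s.
Proof.
elim: s acc => [|x s IH] acc; first by [].
rewrite /= iotaD count_cat /rk /= -/(rk k s).
congr addn.
  rewrite -(count_lt acc x k); apply: eq_in_count => i.
  rewrite mem_iota => /andP[h1 h2] /=.
  case: (ltnP (i + k) (acc + x)) => h3.
    rewrite andbF /=; apply/andP; split; last by lia.
    apply/allP => q /psums_ge hq; apply/negP; lia.
  by rewrite andbT h2.
rewrite -(IH (acc + x)) addnA; apply: eq_in_count => i.
rewrite mem_iota => /andP[h1 h2] /=.
by have -> : (i < acc + x) = false by lia.
Qed.

Section Lin.
Variable K : fieldType.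
Local Open Scope ring_scope.

Lemma rank_jpow n lam k : sumn lam = n ->
  \rank ((jordan_nil K n lam) ^+ k) = rk k lam.
Proof.
move=> hn.
rewrite Jpow (@rank_shift K n k (fun i => noq (psums 0 lam) i k)) (card_ord_count n (fun i => noq (psums 0 lam) i k && (i + k < n)%N)) -hn.
by rewrite -(count_noq k lam 0) add0n.
Qed.

Lemma conj_pow n (S0 N : 'M[K]_n) k : S0 \in unitmx ->
  (S0 *m N *m invmx S0) ^+ k = S0 *m N ^+ k *m invmx S0.
Proof.
move=> hS; elim: k => [|k IH].
  by rewrite !expr0 mulmx1 mulmxV.
rewrite exprSr IH exprSr -!mulmxE !mulmxA mulmxKV //.
Qed.

Lemma rank_pow_jt n (N : 'M[K]_n) lam k : jordan_type N lam ->
  \rank (N ^+ k) = rk k lam.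
Proof.
move=> [_ [hn [S0 [hS hJ]]]].
rewrite -(rank_jpow n lam k hn) -hJ conj_pow //.
rewrite mxrankMfree; last by rewrite row_free_unit unitmx_inv.
apply/eqP; rewrite eqn_leq mxrankM_maxr /=.
rewrite andbT; apply: leq_trans (mxrankM_maxr (invmx S0) (S0 *m N ^+ k)).
by rewrite mulmxA mulVmx // mul1mx.
Qed.

Lemma comm_pow m n (A : 'M[K]_m) (B : 'M[K]_n) (X : 'M[K]_(m, n)) k :
  A *m X = X *m B -> A ^+ k *m X = X *m B ^+ k.
Proof.
move=> h; elim: k => [|k IH]; first by rewrite !expr0 mul1mx mulmx1.
by rewrite !exprSr -!mulmxE -mulmxA h mulmxA IH -mulmxA.
Qed.

Lemma ses_rank p b r (NP : 'M[K]_p) (NB : 'M[K]_b) (NR : 'M[K]_r)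
  (f : 'M[K]_(p, b)) (g : 'M[K]_(b, r)) k :
  NP *m f = f *m NB -> NB *m g = g *m NR ->
  row_free f -> row_full g -> (f <= kermx g)%MS ->
  (\rank (NP ^+ k) + \rank (NR ^+ k) <= \rank (NB ^+ k))%N.
Proof.
move=> hf hg ff fg fk.
rewrite -(mxrank_mul_ker (NB ^+ k) g) addnC.
apply: leq_add.
  rewrite (comm_pow _ _ _ _ _ k hg).
  have [h hh] := row_fullP fg.
  apply: leq_trans (mxrankM_maxr h (g *m NR ^+ k)) => //.
  by rewrite mulmxA hh mul1mx.
rewrite -(mxrankMfree (NP ^+ k) ff) (comm_pow _ _ _ _ _ k hf).
apply: mxrankS; rewrite sub_capmx submxMl /= sub_kermx.
rewrite -mulmxA (comm_pow _ _ _ _ _ k hg) mulmxA.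
by move: fk; rewrite sub_kermx => /eqP ->; rewrite mul0mx.
Qed.
End Lin.

Local Open Scope ring_scope.

Theorem lemma3p6 (K : fieldType) (p b r : nat)
  (NP : 'M[K]_p) (NB : 'M[K]_b) (NR : 'M[K]_r)
  (f : 'M[K]_(p, b)) (g : 'M[K]_(b, r)) (lam mu nu : seq nat) :
  nilpotent_mx NP -> nilpotent_mx NB -> nilpotent_mx NR ->
  NP *m f = f *m NB -> NB *m g = g *m NR ->
  row_free f -> row_full g -> (f == kermx g)%MS ->
  jordan_type NP lam -> jordan_type NB mu -> jordan_type NR nu ->
  dominated (parts (part_union lam nu)) (parts mu) /\
  (forall t : int, interlaced t lam mu ->
     ~ strictly_dominated (diff t mu lam) (parts nu)).
Proof.
move=> _ _ _ hf hg ff fg /andP[fk _] jP jB jR.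
have Hrk : forall c, (rk c lam + rk c nu <= rk c mu)%N.
  move=> c; rewrite -(rank_pow_jt _ _ _ _ c jP) -(rank_pow_jt _ _ _ _ c jB) -(rank_pow_jt _ _ _ _ c jR).
  exact: (ses_rank _ _ _ _ _ _ _ _ _ c hf hg ff fg fk).
have mus : sorted geq mu by case: jB => [/andP[]].
split; first exact: part1_comb.
have key : forall t, interlaced t lam mu -> dominated (parts nu) (diff t mu lam).
  case=> n /=; [exact: part2_pos | exact: part2_neg].
move=> t ht [hd [i hi]].
have := dom_antisym _ _ hd (key t ht) i.
by move/eqP; rewrite (negbTE hi).
Qed.
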